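(* Let $(U,d)$ be an asymmetric pseudometric space, $k\ge 2$, $O\subseteq U$ an optimal solution of AMMD with optimum $R^*=\operatorname{div}(O)>0$, and $R'=\min\{d(u,v): d(u,v)\ge R^*/3,\ u,v\in U,\ u\ne v\}$. Let $0<R\le R'$ and run the clustering procedure Cluster$(U,d,R)$, producing centers $c_1,c_2,\dots$ and sets $A_1,A_2,\dots$. Then (i) $|A_t\cap O|\le 1$ for all $t$; and (ii) for any $t\ne t'$ with $|A_t\cap O|=1$ and $|A_{t'}\cap O|=1$, we have $d_{\min}(c_t,c_{t'})\ge R'\ge R^*/3$.
   Context: An asymmetric pseudometric space $(U,d)$ is a finite set $U$ with $d:U\times U\to\mathbb{R}_{\ge 0}$ such that $d(u,u)=0$ and $d(u,v)\le d(u,w)+d(w,v)$ for all $u,v,w\in U$ ($d$ need not be symmetric). For $S\subseteq U$, $\operatorname{div}(S)=\min_{u,v\in S,\,u\ne v} d(u,v)$; AMMD asks for $O\subseteq U$, $|O|=k$, maximizing $\operatorname{div}(O)$. $d_{\min}(u,v)=\min\{d(u,v),d(v,u)\}$, $d_{\max}(u,v)=\max\{d(u,v),d(v,u)\}$. Cluster$(U,d,R)$: initially all points are unmarked and $t=1$; while an unmarked point exists, choose any unmarked point $c_t$, let $A_t=\{v\in U \text{ unmarked}: d_{\max}(c_t,v)<R\}$, mark all points of $A_t$, add $c_t$ to the output set $U'$, and increment $t$. It returns $U'=\{c_1,c_2,\dots\}$. *)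

(* Defs.v *)
From mathcomp Require Import all_boot all_order all_algebra.
Set Implicit Arguments. Unset Strict Implicit. Unset Printing Implicit Defensive.
Import Order.TTheory GRing.Theory Num.Theory.
Local Open Scope ring_scope.

Section AMMD.
Variables (R : realFieldType) (T : finType) (d : T -> T -> R).

Definition asym_pseudometric : Prop :=
  [/\ forall u, d u u = 0,
      forall u v, 0 <= d u v &
      forall u v w, d u v <= d u w + d w v].

Definition dmin (u v : T) : R := Num.min (d u v) (d v u).
Definition dmax (u v : T) : R := Num.max (d u v) (d v u).

(* an upper bound on all distances; used only as the neutral element of the
   finite minima below (it plays the role of +oo: every minimum taken over a
   non-empty index set is unaffected by it) *)
Definition dtop : R := \big[Num.max/0]_(p : T * T) d p.1 p.2.

(* div(S) = min_{u,v in S, u <> v} d(u,v)  (meaningful for #|S| >= 2) *)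
Definition div (S : {set T}) : R :=
  \big[Num.min/dtop]_(p : T * T | (p.1 \in S) && (p.2 \in S) && (p.1 != p.2))
     d p.1 p.2.

Definition Rprime (Rstar : R) : R :=
  \big[Num.min/dtop]_(p : T * T | (p.1 != p.2) && (Rstar / 3%:R <= d p.1 p.2))
     d p.1 p.2.

(* Cluster(U,d,Rad): M is the set of marked points. *)
Definition clusterA (Rad : R) (M : {set T}) (c : T) : {set T} :=
  [set v | (v \notin M) && (dmax c v < Rad)].

Definition cluster_step (Rad : R) (M : {set T}) (c : T) : {set T} :=
  M :|: clusterA Rad M c.

(* cs = [:: c_1; c_2; ...] is a possible sequence of chosen centers of a
   complete run of Cluster(U,d,Rad) starting from marked set M *)
Fixpoint cluster_run_from (Rad : R) (M : {set T}) (cs : seq T) : bool :=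
  match cs with
  | [::] => M == setT
  | c :: cs' => (c \notin M) && cluster_run_from Rad (cluster_step Rad M c) cs'
  end.

Definition cluster_run (Rad : R) (cs : seq T) : bool :=
  cluster_run_from Rad set0 cs.

(* marked set before step t (0-indexed), and the set A_t of step t *)
Definition marked_before (Rad : R) (cs : seq T) (t : nat) : {set T} :=
  foldl (cluster_step Rad) set0 (take t cs).

Definition clusterAt (Rad : R) (cs : seq T) (x0 : T) (t : nat) : {set T} :=
  clusterA Rad (marked_before Rad cs t) (nth x0 cs t).

End AMMD.

(* Main.v *)
Require Import Defs.
From mathcomp Require Import all_boot all_order all_algebra.
From mathcomp Require Import lra.
Import Order.TTheory GRing.Theory Num.Theory.
Local Open Scope ring_scope.

Section Aux.
Variables (R : realFieldType) (T : finType) (d : T -> T -> R).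

Lemma marked_succ Rad cs t :
  (marked_before d Rad cs t \subset marked_before d Rad cs t.+1).
Proof.
rewrite /marked_before.
case: (ltnP t (size cs)) => ht.
  case: cs ht => [//|c s] ht.
  rewrite (take_nth c ht) foldl_rcons /cluster_step; exact: subsetUl.
by rewrite !take_oversize // (leq_trans ht).
Qed.

Lemma marked_mono Rad cs t t' : (t <= t')%N ->
  (marked_before d Rad cs t \subset marked_before d Rad cs t').
Proof.
elim: t' => [|t' IH]; first by rewrite leqn0 => /eqP ->.
rewrite leq_eqVlt => /orP [/eqP -> //|].
rewrite ltnS => /IH H; exact: subset_trans H (marked_succ _ _ _).
Qed.

Lemma A_sub_next Rad cs x0 t : (t < size cs)%N ->
  clusterAt d Rad cs x0 t \subset marked_before d Rad cs t.+1.
Proof.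
move=> ht; rewrite /marked_before (take_nth x0 ht) foldl_rcons /cluster_step.
exact: subsetUr.
Qed.

Lemma run_notin Rad M cs : cluster_run_from d Rad M cs ->
  forall x0 t, (t < size cs)%N -> nth x0 cs t \notin foldl (cluster_step d Rad) M (take t cs).
Proof.
elim: cs M => [|c cs IH] M //= /andP [hc hr] x0 [|t] //= ht.
exact: IH.
Qed.

End Aux.

Theorem proposition5p2 (R : realFieldType) (T : finType) (d : T -> T -> R)
  (hd : asym_pseudometric d)
  (k : nat) (hk : (2 <= k)%N)
  (O : {set T}) (hOk : #|O| = k)
  (hOopt : forall S : {set T}, #|S| = k -> div d S <= div d O)
  (hpos : 0 < div d O)
  (Rad : R) (hR0 : 0 < Rad) (hRle : Rad <= Rprime d (div d O))
  (cs : seq T) (hrun : cluster_run d Rad cs) (x0 : T) :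
  (forall t, (t < size cs)%N -> (#|clusterAt d Rad cs x0 t :&: O| <= 1)%N) /\
  (forall t t', (t < size cs)%N -> (t' < size cs)%N -> t != t' ->
     #|clusterAt d Rad cs x0 t :&: O| = 1%N ->
     #|clusterAt d Rad cs x0 t' :&: O| = 1%N ->
     Rprime d (div d O) <= dmin d (nth x0 cs t) (nth x0 cs t') /\
     div d O / 3%:R <= Rprime d (div d O)).
Proof.
case: hd => d0 dge dtri.
set Rs := div d O.
set Rp := Rprime d Rs.
have hRs : 0 < Rs := hpos.
have hRp : Rad <= Rp := hRle.
have hdivO : forall o o', o \in O -> o' \in O -> o != o' -> Rs <= d o o'.
  move=> o o' ho ho' hne.
  by apply: (@bigmin_le_cond _ _ _ _ (o, o')) => /=; rewrite ho ho' hne.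
have hRsdt : Rs <= dtop d by exact: bigmin_le_id.
have hRpge : Rs / 3%:R <= Rp.
  apply: le_bigmin => [|p /andP [_ //]].
  apply: (le_trans _ hRsdt); lra.
have small : forall u v, d u v < Rp -> d u v < Rs / 3%:R.
  move=> u v huv; case: (eqVneq u v) => [->|hne]; first by rewrite d0; lra.
  rewrite ltNge; apply/negP => H.
  have : Rp <= d u v by apply: (@bigmin_le_cond _ _ _ _ (u, v)) => /=; rewrite hne H.
  lra.
have inA : forall t v, v \in clusterAt d Rad cs x0 t ->
   v \notin marked_before d Rad cs t /\
   d (nth x0 cs t) v < Rs / 3%:R /\ d v (nth x0 cs t) < Rs / 3%:R.
  move=> t v; rewrite /clusterAt /clusterA inE => /andP [hv]; rewrite /dmax gt_max.
  move=> /andP [h1 h2]; split => //; split; apply: small; lra.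
split.
  move=> t ht; rewrite leqNgt; apply/negP => /card_gt1P [o [o' [ho ho' hne]]].
  move: ho ho'; rewrite !in_setI => /andP [/inA [_ [h1 h2]] hoO] /andP [/inA [_ [h3 h4]] ho'O].
  have := hdivO _ _ hoO ho'O hne.
  have := dtri o o' (nth x0 cs t); lra.
have hcA : forall t, (t < size cs)%N -> nth x0 cs t \in clusterAt d Rad cs x0 t.
  move=> t ht; rewrite /clusterAt /clusterA inE; apply/andP; split.
    exact: run_notin hrun x0 t ht.
  by rewrite /dmax d0 maxxx.
have disj : forall t t' v, (t < t')%N -> (t' < size cs)%N ->
    v \in clusterAt d Rad cs x0 t -> v \notin clusterAt d Rad cs x0 t'.
  move=> t t' v htt' ht' hv.
  have ht : (t < size cs)%N by apply: ltn_trans ht'.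
  have hM : v \in marked_before d Rad cs t'.
    apply: (subsetP (@marked_mono _ _ d Rad cs _ _ htt')).
    exact: (subsetP (@A_sub_next _ _ d Rad cs x0 _ ht)).
  by rewrite /clusterAt /clusterA inE hM.
have claim : forall t t' o o', (t < t')%N -> (t' < size cs)%N ->
    o \in clusterAt d Rad cs x0 t -> o \in O ->
    o' \in clusterAt d Rad cs x0 t' -> o' \in O ->
    Rp <= d (nth x0 cs t) (nth x0 cs t') /\ Rp <= d (nth x0 cs t') (nth x0 cs t).
  move=> t t' o o' htt' ht' ho hoO ho' ho'O.
  have ht : (t < size cs)%N by apply: ltn_trans ht'.
  have hne : o != o' by apply/eqP => E; move: (disj _ _ _ htt' ht' ho); rewrite E ho'.
  have hcne : nth x0 cs t != nth x0 cs t'.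
    by apply/eqP => E; move: (disj _ _ _ htt' ht' (hcA _ ht)); rewrite E hcA.
  have [_ [h1 h2]] := inA _ _ ho.
  have [_ [h3 h4]] := inA _ _ ho'.
  have hoo := hdivO _ _ hoO ho'O hne.
  have ho'o := hdivO _ _ ho'O hoO ltac:(by rewrite eq_sym).
  split; rewrite leNgt; apply/negP => /small H.
    have := dtri o o' (nth x0 cs t); have := dtri (nth x0 cs t) o' (nth x0 cs t'); lra.
  have := dtri o' o (nth x0 cs t'); have := dtri (nth x0 cs t') o (nth x0 cs t); lra.
move=> t t' ht ht' htt' /eqP/cards1P [o Eo] /eqP/cards1P [o' Eo'].
have : o \in clusterAt d Rad cs x0 t :&: O by rewrite Eo set11.
have : o' \in clusterAt d Rad cs x0 t' :&: O by rewrite Eo' set11.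
rewrite !in_setI => /andP [ho' ho'O] /andP [ho hoO].
split => //; rewrite /dmin le_min.
case: (ltngtP t t') htt' => // h _.
  by have [-> ->] := claim _ _ _ _ h ht' ho hoO ho' ho'O.
by have [-> ->] := claim _ _ _ _ h ht ho' ho'O ho hoO.
Qed.
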